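(* Let $f=\frac1n\sum_{z=1}^nf_z$ where each $\nabla f_z$ is $L$-Lipschitz and $\|\nabla f_z(x)\|\le l$ for all $x$ and $z$. Consider one SCSG epoch (see context) from $\tilde x^{k-1}$ producing $\tilde x^k$, with $b\ge1$, $n\ge 8b$, and $\eta L=\gamma(b/n)^{2/3}$, $\gamma\le\frac13$. Then the increase of function value caused by disturbance satisfies $$\mathbb{E}[f(\tilde x^k)-f(\tilde x^{k-1})]\le\frac{5l^2\gamma^2}{L}\left(\frac bn\right)^{1/3}.$$
   Context: One SCSG epoch from $\tilde x^{k-1}$: $\tilde\mu=\nabla f(\tilde x^{k-1})$, $x_0=\tilde x^{k-1}$, $N\sim\mathrm{Geom}(n/(n+b))$ ($P(N=j)=\frac b{n+b}(\frac n{n+b})^j$, so $\mathbb{E}N=n/b$), for $t=1..N$: $x_t=x_{t-1}-\eta(\nabla f_{I_t}(x_{t-1})-\nabla f_{I_t}(\tilde x^{k-1})+\tilde\mu)$ with $I_t\subset[n]$ uniform of size $b$, $\nabla f_I=\frac1{|I|}\sum_{i\in I}\nabla f_i$; $\tilde x^k=x_N$. *)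

(* Defs.v *)
From HB Require Import structures.
From mathcomp Require Import all_boot all_order all_algebra.
From mathcomp Require Import all_classical all_reals all_analysis.
Set Implicit Arguments. Unset Strict Implicit. Unset Printing Implicit Defensive.
Import Order.TTheory GRing.Theory Num.Theory.
Import numFieldNormedType.Exports.
Local Open Scope ring_scope.

Definition dotv (R : realType) (d : nat) (u v : 'rV[R]_d) : R :=
  \sum_(i < d) u 0 i * v 0 i.
Definition enorm (R : realType) (d : nat) (v : 'rV[R]_d) : R :=
  Num.sqrt (dotv v v).

Definition is_gradient (R : realType) (d : nat)
    (h : 'rV[R]_d -> R) (g : 'rV[R]_d -> 'rV[R]_d) : Prop :=
  forall x, differentiable h x /\ ('d h x : 'rV[R]_d -> R) = (fun v => dotv (g x) v).

Definition favg (R : realType) (d n : nat) (F : 'I_n -> 'rV[R]_d -> R) x : R :=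
  n%:R^-1 * \sum_(z < n) F z x.

Definition grad_batch (R : realType) (d n : nat) (G : 'I_n -> 'rV[R]_d -> 'rV[R]_d)
    (I : {set 'I_n}) x : 'rV[R]_d :=
  #|I|%:R^-1 *: \sum_(i in I) G i x.

Definition grad_full (R : realType) (d n : nat) (G : 'I_n -> 'rV[R]_d -> 'rV[R]_d) x
  : 'rV[R]_d := n%:R^-1 *: \sum_(z < n) G z x.

(* inner iterates x_t of one SCSG epoch started at x0 = tilde x^{k-1},
   minibatch I_{t+1} = S t *)
Fixpoint scsg_iter (R : realType) (d n : nat) (G : 'I_n -> 'rV[R]_d -> 'rV[R]_d)
    (eta : R) (x0 : 'rV[R]_d) (S : nat -> {set 'I_n}) (t : nat) : 'rV[R]_d :=
  match t with
  | 0 => x0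
  | t'.+1 =>
      let x := scsg_iter G eta x0 S t' in
      x - eta *: (grad_batch G (S t') x - grad_batch G (S t') x0 + grad_full G x0)
  end.

Definition batches (n b j : nat) : {set {ffun 'I_j -> {set 'I_n}}} :=
  [set S : {ffun 'I_j -> {set 'I_n}} | [forall t : 'I_j, #|S t| == b]].

Definition seq_of_ffun (n j : nat) (S : {ffun 'I_j -> {set 'I_n}}) : nat -> {set 'I_n} :=
  fun t => match (insub t : option 'I_j) with Some i => S i | None => finset.set0 end.

(* E[ f(x_j) - f(x_0) ] when the j minibatches are i.i.d. uniform b-subsets *)
Definition cond_exp_step (R : realType) (d n b : nat) (F : 'I_n -> 'rV[R]_d -> R)
    (G : 'I_n -> 'rV[R]_d -> 'rV[R]_d) (eta : R) (x0 : 'rV[R]_d) (j : nat) : R :=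
  #|batches n b j|%:R^-1 *
  \sum_(S in batches n b j)
     (favg F (scsg_iter G eta x0 (seq_of_ffun S) j) - favg F x0).

(* P(N = j) for N ~ Geom(n/(n+b)) *)
Definition geomP (R : realType) (n b j : nat) : R :=
  (b%:R / (n + b)%:R) * (n%:R / (n + b)%:R) ^+ j.

(* term j of the series E[f(tilde x^k) - f(tilde x^{k-1})] = sum_j P(N=j) E[..|N=j] *)
Definition scsg_term (R : realType) (d n b : nat) (F : 'I_n -> 'rV[R]_d -> R)
    (G : 'I_n -> 'rV[R]_d -> 'rV[R]_d) (eta : R) (x0 : 'rV[R]_d) (j : nat) : R :=
  geomP R n b j * cond_exp_step b F G eta x0 j.

(* Main.v *)
Require Import Defs.
From HB Require Import structures.
From mathcomp Require Import all_boot all_order all_algebra.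
From mathcomp Require Import all_classical all_reals all_analysis.
From mathcomp Require Import ring lra.
Import Order.TTheory GRing.Theory Num.Theory.
Import numFieldNormedType.Exports.
Local Open Scope ring_scope.
Set Implicit Arguments. Unset Strict Implicit. Unset Printing Implicit Defensive.

Section Vec.
Variables (R : realType) (d : nat).
Implicit Types u v w : 'rV[R]_d.

Lemma dotvC u v : dotv u v = dotv v u.
Proof. by apply: eq_bigr => i _; rewrite mulrC. Qed.

Lemma dotvDr u v w : dotv u (v + w) = dotv u v + dotv u w.
Proof. by rewrite /dotv -big_split; apply: eq_bigr => i _; rewrite mxE mulrDr. Qed.

Lemma dotvZr a u v : dotv u (a *: v) = a * dotv u v.
Proof. by rewrite /dotv mulr_sumr; apply: eq_bigr => i _; rewrite mxE mulrCA. Qed.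

Lemma dotvNr u v : dotv u (- v) = - dotv u v.
Proof. by rewrite /dotv -sumrN; apply: eq_bigr => i _; rewrite mxE mulrN. Qed.

Lemma dotvBr u v w : dotv u (v - w) = dotv u v - dotv u w.
Proof. by rewrite dotvDr dotvNr. Qed.

Lemma dotvDl u v w : dotv (v + w) u = dotv v u + dotv w u.
Proof. by rewrite dotvC dotvDr !(dotvC u). Qed.

Lemma dotvBl u v w : dotv (v - w) u = dotv v u - dotv w u.
Proof. by rewrite dotvC dotvBr !(dotvC u). Qed.

Lemma dotvZl a u v : dotv (a *: v) u = a * dotv v u.
Proof. by rewrite dotvC dotvZr dotvC. Qed.

Lemma dotv_sumr (I : finType) (P : pred I) (f : I -> 'rV[R]_d) u :
  dotv u (\sum_(i | P i) f i) = \sum_(i | P i) dotv u (f i).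
Proof.
rewrite /dotv exchange_big /=; apply: eq_bigr => k _.
by rewrite summxE mulr_sumr.
Qed.

Lemma dotv_ge0 u : 0 <= dotv u u.
Proof. by apply: sumr_ge0 => i _; rewrite -expr2 sqr_ge0. Qed.

Lemma dotv0r u : dotv u 0 = 0.
Proof. by rewrite /dotv big1 // => i _; rewrite mxE mulr0. Qed.

Lemma CS u v : dotv u v ^+ 2 <= dotv u u * dotv v v.
Proof.
rewrite -subr_ge0.
have -> : dotv u u * dotv v v - dotv u v ^+ 2 =
  2^-1 * \sum_(i < d) \sum_(j < d) (u 0 i * v 0 j - u 0 j * v 0 i) ^+ 2.
  have E1 : dotv u u * dotv v v = \sum_(i < d) \sum_(j < d) (u 0 i * u 0 i) * (v 0 j * v 0 j).
    by rewrite /dotv mulr_suml; apply: eq_bigr => i _; rewrite mulr_sumr.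
  have E2 : dotv u v ^+ 2 = \sum_(i < d) \sum_(j < d) (u 0 i * v 0 i) * (u 0 j * v 0 j).
    by rewrite expr2 /dotv mulr_suml; apply: eq_bigr => i _; rewrite mulr_sumr.
  have E3 : \sum_(i < d) \sum_(j < d) (u 0 i * v 0 j - u 0 j * v 0 i) ^+ 2 =
     \sum_(i < d) \sum_(j < d) ((u 0 i * u 0 i) * (v 0 j * v 0 j)) +
     \sum_(i < d) \sum_(j < d) ((u 0 j * u 0 j) * (v 0 i * v 0 i)) -
     2 * \sum_(i < d) \sum_(j < d) ((u 0 i * v 0 i) * (u 0 j * v 0 j)).
    rewrite mulr_sumr -!big_split -sumrN -big_split /=; apply: eq_bigr => i _.
    rewrite mulr_sumr -!big_split -sumrN -big_split /=; apply: eq_bigr => j _.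
    ring.
  rewrite E3 E1 E2 (exchange_big _ _ _ _ _ (fun i j => (u 0 j * u 0 j) * (v 0 i * v 0 i))) /=.
  by field.
by apply: mulr_ge0; [rewrite invr_ge0 | apply: sumr_ge0 => i _; apply: sumr_ge0 => j _; apply: sqr_ge0].
Qed.

Lemma enorm_ge0 u : 0 <= enorm u.
Proof. exact: sqrtr_ge0. Qed.

Lemma enorm_sq u : enorm u ^+ 2 = dotv u u.
Proof. by rewrite /enorm sqr_sqrtr // dotv_ge0. Qed.

Lemma dotv_le u v : `|dotv u v| <= enorm u * enorm v.
Proof.
rewrite -sqrtr_sqr /enorm -sqrtrM ?dotv_ge0 //.
by rewrite ler_sqrt ?mulr_ge0 ?dotv_ge0 // CS.
Qed.

Lemma dotv_le' u v : dotv u v <= enorm u * enorm v.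
Proof. exact: le_trans (ler_norm _) (dotv_le u v). Qed.

Lemma enormD u v : enorm (u + v) <= enorm u + enorm v.
Proof.
rewrite {1}/enorm -(ger0_norm (addr_ge0 (enorm_ge0 u) (enorm_ge0 v))) -sqrtr_sqr.
rewrite ler_sqrt ?sqr_ge0 // sqrrD !enorm_sq dotvDl !dotvDr (dotvC v u).
have := dotv_le' u v; lra.
Qed.

Lemma enormZ a u : enorm (a *: u) = `|a| * enorm u.
Proof.
by rewrite /enorm dotvZl dotvZr mulrA -expr2 sqrtrM ?sqr_ge0 // sqrtr_sqr.
Qed.

Lemma enormN u : enorm (- u) = enorm u.
Proof. by rewrite -scaleN1r enormZ normrN normr1 mul1r. Qed.

Lemma enorm0 : enorm (0 : 'rV[R]_d) = 0.
Proof. by rewrite /enorm dotv0r sqrtr0. Qed.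

Lemma enormB u v : enorm (u - v) <= enorm u + enorm v.
Proof. by rewrite -(enormN v) enormD. Qed.

Lemma enorm_sum (I : finType) (P : pred I) (f : I -> 'rV[R]_d) :
  enorm (\sum_(i | P i) f i) <= \sum_(i | P i) enorm (f i).
Proof.
elim/big_ind2 : _ => //; first by rewrite enorm0.
by move=> x1 x2 y1 y2 h1 h2; apply: le_trans (enormD _ _) (lerD h1 h2).
Qed.

End Vec.
Section Calc.
Variables (R : realType) (d : nat).
Variables (F : 'rV[R]_d -> R) (G : 'rV[R]_d -> 'rV[R]_d).
Hypothesis HG : is_gradient F G.

Lemma phi_deriv (x h : 'rV[R]_d) (s : R) :
  is_derive s (1 : R) (fun t : R => F (x + t *: h)) (dotv (G (x + s *: h)) h).
Proof.
have [dF dE] := HG (x + s *: h).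
have E : (fun k : R => k^-1 *: (((fun t : R => F (x + t *: h)) \o shift s) (k *: 1)
            - (fun t : R => F (x + t *: h)) s)) =
         (fun k : R => k^-1 *: ((F \o shift (x + s *: h)) (k *: h) - F (x + s *: h))).
  apply: funext => k /=; congr (_ *: (F _ - _)).
  by rewrite scalerDl [k *: 1]mulr1 addrCA addrC.
have Hd : derivable F (x + s *: h) h := diff_derivable (v:=h) dF.
split.
  by rewrite /derivable E.
by rewrite /derive E -/(derive F _ h) deriveE // dE.
Qed.

Lemma lipF l : (forall y, enorm (G y) <= l) -> forall x h, `|F (x + h) - F x| <= l * enorm h.
Proof.
move=> Hl x h.
have [c _ Hc] := @MVT R (fun t : R => F (x + t *: h)) (fun t => dotv (G (x + t *: h)) h) 0 1
   ltr01 (fun t _ => phi_deriv x h t) (derivable_within_continuous (f := fun t : R => F (x + t *: h)) (i := `[0, 1]%R) (fun t _ => @ex_derive _ _ _ _ _ _ _ (phi_deriv x h t))).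
rewrite scale1r scale0r addr0 subr0 mulr1 in Hc.
rewrite Hc; apply: le_trans (dotv_le _ _) _.
by apply: ler_wpM2r; [exact: enorm_ge0 | exact: Hl].
Qed.

Lemma descent L : 0 <= L -> (forall y z, enorm (G y - G z) <= L * enorm (y - z)) ->
  forall x h, F (x + h) - F x - dotv (G x) h <= L / 2 * enorm h ^+ 2.
Proof.
move=> L0 HL x h.
set c := dotv (G x) h; set K := L / 2 * enorm h ^+ 2.
pose psi := (fun t : R => F (x + t *: h)) - (c \*: (@id R)) - (K \*: ((@id R) * (@id R))).
have Hd t : is_derive t (1:R) psi
   (dotv (G (x + t *: h)) h - c *: (1:R) - K *: (t *: (1:R) + t *: (1:R))).
  apply: is_deriveB; first apply: is_deriveB.
  - exact: phi_deriv.
have Hc := derivable_within_continuous (f := psi) (i := `[0, 1]%R) (fun t _ => @ex_derive _ _ _ _ _ _ _ (Hd t)).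
have [t /andP[t0 t1] Ht] := @MVT R psi _ 0 1 ltr01 (fun t _ => Hd t) Hc.
have E s : psi s = F (x + s *: h) - c * s - K * (s * s) by [].
rewrite !E scale1r scale0r addr0 [c%:A]mulr1 [t%:A]mulr1 in Ht.
have key : dotv (G (x + t *: h)) h - c <= L * t * enorm h ^+ 2.
  rewrite /c -dotvBl; apply: le_trans (dotv_le' _ _) _.
  have H := HL (x + t *: h) x.
  have E2 : x + t *: h - x = t *: h by rewrite addrC addKr.
  rewrite E2 enormZ (ger0_norm (ltW t0)) in H.
  apply: le_trans (ler_wpM2r (enorm_ge0 h) H) _.
  by rewrite expr2 !mulrA.
have KX : K * (t + t) = L * t * enorm h ^+ 2 by rewrite /K; field.
change (K *: (t + t)) with (K * (t + t)) in Ht.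
lra.
Qed.


End Calc.

Section Comb.
Variables (R : realType) (n b : nat).
Local Notation B := [set I : {set 'I_n} | #|I| == b].

Definition cnt (i : 'I_n) : R := \sum_(I in B) ((i \in I)%:R : R).

Definition sw (i k x : 'I_n) : 'I_n := if x == i then k else if x == k then i else x.

Lemma swK i k : involutive (sw i k).
Proof.
move=> x; rewrite /sw.
case: (eqVneq x i) => [->|xi]; first by rewrite eqxx; case: eqVneq.
case: (eqVneq x k) => [->|xk]; first by rewrite eqxx.
by rewrite (negPf xi) (negPf xk).
Qed.

Lemma cnt_const i k : cnt i = cnt k.
Proof.
pose h := fun I : {set 'I_n} => sw i k @: I.
have hK : involutive h.
  by move=> I; rewrite /h -imset_comp (eq_imset _ (swK i k)) imset_id.
have sinj : injective (sw i k) := can_inj (swK i k).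
rewrite /cnt (reindex h) /=; last by apply: onW_bij; exact: inv_bij hK.
apply: eq_big => I.
  by rewrite !inE /h card_imset.
move=> _; have -> : i = sw i k k by rewrite /sw eqxx; case: eqVneq.
by rewrite /h mem_imset.
Qed.

Lemma sum_cnt : \sum_i cnt i = #|B|%:R * b%:R.
Proof.
have -> : #|B|%:R * b%:R = \sum_(I in B) (b%:R : R) by rewrite sumr_const mulr_natl.
rewrite /cnt exchange_big /=.
apply: eq_bigr => I; rewrite inE => /eqP <-.
rewrite -sumr_const [in RHS]big_mkcond /=.
by apply: eq_bigr => i _; case: (i \in I).
Qed.

Lemma cnt_val (i0 : 'I_n) i : cnt i = #|B|%:R * b%:R / n%:R.
Proof.
have n0 : (n%:R : R) != 0 by rewrite pnatr_eq0 -lt0n; apply: leq_ltn_trans (ltn_ord i0).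
rewrite -sum_cnt (eq_bigr (fun _ => cnt i)) ?sumr_const; last by move=> k _; exact: cnt_const.
by rewrite card_ord -[cnt i *+ n]mulr_natr mulfK.
Qed.

Lemma sum_batch (V : lmodType R) (i0 : 'I_n) (w : 'I_n -> V) :
  \sum_(I in B) \sum_(i in I) w i = (#|B|%:R * b%:R / n%:R) *: \sum_i w i.
Proof.
have E : forall I : {set 'I_n}, \sum_(i in I) w i = \sum_i ((i \in I)%:R : R) *: w i.
  by move=> I; rewrite big_mkcond /=; apply: eq_bigr => i _; case: (i \in I); rewrite ?scale1r ?scale0r.
rewrite (eq_bigr _ (fun I _ => E I)) exchange_big /= scaler_sumr.
apply: eq_bigr => i _; rewrite -scaler_suml.
by rewrite -(cnt_val i0 i).
Qed.


End Comb.

Section Split.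
Variables (n b j : nat).

Definition join (S : {ffun 'I_j -> {set 'I_n}}) (I : {set 'I_n}) : {ffun 'I_j.+1 -> {set 'I_n}} :=
  [ffun t : 'I_j.+1 => if (insub (val t) : option 'I_j) is Some t' then S t' else I].
Definition splitf (S : {ffun 'I_j.+1 -> {set 'I_n}}) :=
  ([ffun t : 'I_j => S (widen_ord (leqnSn j) t)], S ord_max).

Lemma joinK : cancel (fun p => join p.1 p.2) splitf.
Proof.
move=> [S I]; rewrite /splitf /join; congr pair.
  by apply/ffunP => t; rewrite !ffunE /= valK.
by rewrite ffunE /= insubF // ltnn.
Qed.

Lemma splitK : cancel splitf (fun p => join p.1 p.2).
Proof.
move=> S; apply/ffunP => t; rewrite !ffunE; case: insubP => [t' _ vt|] /=.
  by rewrite ffunE; congr (S _); apply: val_inj => /=.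
rewrite -leqNgt => H; congr (S _); apply: val_inj => /=; apply/eqP.
by rewrite eqn_leq H -ltnS ltn_ord.
Qed.

Lemma join_batches S I :
  (join S I \in batches n b j.+1) = (S \in batches n b j) && (#|I| == b).
Proof.
rewrite !inE; apply/forallP/andP.
  move=> H; split.
    apply/forallP => t; have := H (widen_ord (leqnSn j) t).
    by rewrite ffunE /= valK.
  by have := H ord_max; rewrite ffunE /= insubF // ltnn.
case=> /forallP H1 H2 t; rewrite ffunE; case: insubP => [t' _ _|_] //; exact: H1.
Qed.

Lemma seq_join S I t : (t < j)%N -> seq_of_ffun (join S I) t = seq_of_ffun S t.
Proof.
move=> tj; have t1 : (t < j.+1)%N by apply: ltnW.
rewrite /seq_of_ffun; case: insubP => [u _ vu|]; last by rewrite t1.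
rewrite /join ffunE -vu; case: insubP => [v _ _|] //; by rewrite vu tj.
Qed.

Lemma seq_join_last S I : seq_of_ffun (join S I) j = I.
Proof.
rewrite /seq_of_ffun; case: insubP => [u _ vu|]; last by rewrite ltnSn.
by rewrite /join ffunE vu insubF // ltnn.
Qed.

Lemma sum_join (R : realType) (H : {ffun 'I_j.+1 -> {set 'I_n}} -> R) :
  \sum_(S in batches n b j.+1) H S =
  \sum_(S in batches n b j) \sum_(I in [set I : {set 'I_n} | #|I| == b]) H (join S I).
Proof.
rewrite (reindex (fun p => join p.1 p.2)) /=; last first.
  by apply: onW_bij; exists splitf; [exact: joinK | exact: splitK].
rewrite [RHS]pair_big_dep; apply: eq_bigl => -[S I] /=.
rewrite join_batches; congr (_ && _); by rewrite inE.
Qed.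

End Split.

Lemma iter_ext (R : realType) d n G (eta : R) (x0 : 'rV[R]_d) (s s' : nat -> {set 'I_n}) k :
  (forall t, (t < k)%N -> s t = s' t) -> scsg_iter G eta x0 s k = scsg_iter G eta x0 s' k.
Proof.
elim: k => [//|k IH] H /=; rewrite IH ?H // => t tk; apply: H; exact: ltnW.
Qed.

Section Main.
Variables (R : realType) (d n b : nat).
Variables (F : 'I_n -> 'rV[R]_d -> R) (G : 'I_n -> 'rV[R]_d -> 'rV[R]_d).
Variables (L l eta : R) (x0 : 'rV[R]_d).
Hypothesis HG : forall z, is_gradient (F z) (G z).
Hypothesis L0 : 0 <= L.
Hypothesis HL : forall z x y, enorm (G z x - G z y) <= L * enorm (x - y).
Hypothesis Hl : forall z x, enorm (G z x) <= l.
Hypothesis b1 : (1 <= b)%N.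
Hypothesis bn : (b <= n)%N.
Hypothesis eta0 : 0 <= eta.

Let n0 : (0 < n)%N. Proof. exact: leq_trans b1 bn. Qed.
Let i0 : 'I_n := Ordinal n0.
Let nR : (n%:R : R) != 0. Proof. by rewrite pnatr_eq0 -lt0n n0. Qed.
Let bR : (b%:R : R) != 0. Proof. by rewrite pnatr_eq0 -lt0n b1. Qed.

Lemma l_ge0 : 0 <= l.
Proof. exact: le_trans (enorm_ge0 _) (Hl i0 0). Qed.

Lemma dotv_suml (I : finType) (P : pred I) (f : I -> 'rV[R]_d) u :
  dotv (\sum_(i | P i) f i) u = \sum_(i | P i) dotv (f i) u.
Proof. by rewrite dotvC dotv_sumr; apply: eq_bigr => i _; rewrite dotvC. Qed.

Lemma favg_descent x h :
  favg F (x + h) - favg F x - dotv (grad_full G x) h <= L / 2 * enorm h ^+ 2.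
Proof.
rewrite /favg /grad_full dotvZl dotv_suml -!mulrBr -!sumrB.
have -> : L / 2 * enorm h ^+ 2 = n%:R^-1 * \sum_(z < n) (L / 2 * enorm h ^+ 2).
  by rewrite sumr_const card_ord -[X in _ = _ * X]mulr_natl mulrA mulVf // mul1r.
apply: ler_wpM2l; first by rewrite invr_ge0 ler0n.
apply: ler_sum => z _; exact: descent.
Qed.

Lemma favg_lip x h : `|favg F (x + h) - favg F x| <= l * enorm h.
Proof.
rewrite /favg -mulrBr -sumrB normrM ger0_norm ?invr_ge0 ?ler0n //.
have -> : l * enorm h = n%:R^-1 * \sum_(z < n) (l * enorm h).
  by rewrite sumr_const card_ord -[X in _ = _ * X]mulr_natl mulrA mulVf // mul1r.
apply: ler_wpM2l; first by rewrite invr_ge0 ler0n.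
apply: le_trans (ler_norm_sum _ _ _) _.
apply: ler_sum => z _; exact: lipF.
Qed.

Local Notation B := [set I : {set 'I_n} | #|I| == b].

Lemma enorm_gb I x : I \in B -> enorm (grad_batch G I x) <= l.
Proof.
rewrite inE => /eqP IB; rewrite /grad_batch IB enormZ ger0_norm ?invr_ge0 ?ler0n //.
apply: le_trans (ler_wpM2l _ (enorm_sum _ _)) _; first by rewrite invr_ge0 ler0n.
apply: le_trans (ler_wpM2l _ (ler_sum _ (fun i _ => Hl i x))) _; first by rewrite invr_ge0 ler0n.
by rewrite sumr_const IB -[X in _ * X <= _]mulr_natl mulrA mulVf // mul1r.
Qed.

Lemma enorm_gf x : enorm (grad_full G x) <= l.
Proof.
rewrite /grad_full enormZ ger0_norm ?invr_ge0 ?ler0n //.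
apply: le_trans (ler_wpM2l _ (enorm_sum _ _)) _; first by rewrite invr_ge0 ler0n.
apply: le_trans (ler_wpM2l _ (ler_sum _ (fun i _ => Hl i x))) _; first by rewrite invr_ge0 ler0n.
by rewrite sumr_const card_ord -[X in _ * X <= _]mulr_natl mulrA mulVf // mul1r.
Qed.

Definition vdir I x := grad_batch G I x - grad_batch G I x0 + grad_full G x0.

Lemma enorm_v I x : I \in B -> enorm (vdir I x) <= 3 * l.
Proof.
move=> IB; apply: le_trans (enormD _ _) _.
have := enormB (grad_batch G I x) (grad_batch G I x0).
have := enorm_gb x IB; have := enorm_gb x0 IB; have := enorm_gf x0.
lra.
Qed.

Lemma sum_gb y : \sum_(I in B) grad_batch G I y = #|B|%:R *: grad_full G y.
Proof.
have -> : \sum_(I in B) grad_batch G I y = \sum_(I in B) b%:R^-1 *: \sum_(i in I) G i y.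
  by apply: eq_bigr => I; rewrite inE => /eqP IB; rewrite /grad_batch IB.
rewrite -scaler_sumr (sum_batch b i0) /grad_full !scalerA; congr (_ *: _).
by rewrite [_ * b%:R]mulrC -!mulrA mulKf.
Qed.

Lemma sum_v x : \sum_(I in B) vdir I x = #|B|%:R *: grad_full G x.
Proof.
rewrite /vdir big_split sumrB /= !sum_gb sumr_const !scaler_nat.
by rewrite subrK.
Qed.

Definition stepx x I := x - eta *: vdir I x.
Definition lo := - (l * (eta * (3 * l))).
Definition hi := L / 2 * (eta * (3 * l)) ^+ 2.

Lemma step_term_ub x I : I \in B ->
  favg F (stepx x I) - favg F x <= - (eta * dotv (grad_full G x) (vdir I x)) + hi.
Proof.
move=> IB; have := favg_descent x (- (eta *: vdir I x)).
rewrite dotvNr dotvZr enormN enormZ (ger0_norm eta0) => H.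
have Hv := enorm_v x IB.
have H2 : (eta * enorm (vdir I x)) ^+ 2 <= (eta * (3 * l)) ^+ 2.
  rewrite !expr2; apply: ler_pM; rewrite ?mulr_ge0 ?enorm_ge0 //; exact: ler_wpM2l.
have H3 : L / 2 * (eta * enorm (vdir I x)) ^+ 2 <= hi.
  by rewrite /hi; apply: ler_wpM2l => //; apply: mulr_ge0 => //; rewrite invr_ge0.
rewrite /stepx; lra.
Qed.

Lemma step_term_lb x I : I \in B -> lo <= favg F (stepx x I) - favg F x.
Proof.
move=> IB; have := favg_lip x (- (eta *: vdir I x)).
rewrite enormN enormZ (ger0_norm eta0) ler_norml => /andP[H _].
have Hv := enorm_v x IB.
have H2 : l * (eta * enorm (vdir I x)) <= l * (eta * (3 * l)).
  by apply: ler_wpM2l; [exact: l_ge0 | exact: ler_wpM2l].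
rewrite /lo /stepx; lra.
Qed.

Lemma step_sum_ub x : \sum_(I in B) (favg F (stepx x I) - favg F x) <= #|B|%:R * hi.
Proof.
apply: le_trans (ler_sum _ (fun I IB => step_term_ub x IB)) _.
rewrite big_split /= sumrN -mulr_sumr -dotv_sumr sum_v dotvZr sumr_const -mulr_natl.
have : 0 <= eta * (#|B|%:R * dotv (grad_full G x) (grad_full G x)).
  by rewrite mulr_ge0 // mulr_ge0 ?ler0n ?dotv_ge0.
lra.
Qed.

Lemma step_sum_lb x : #|B|%:R * lo <= \sum_(I in B) (favg F (stepx x I) - favg F x).
Proof.
apply: le_trans _ (ler_sum _ (fun I IB => step_term_lb x IB)).
by rewrite sumr_const -[lo *+ _]mulr_natl.
Qed.

Lemma iterS s k : scsg_iter G eta x0 s k.+1 = stepx (scsg_iter G eta x0 s k) (s k).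
Proof. by []. Qed.

Lemma B_ne : exists I0 : {set 'I_n}, I0 \in B.
Proof.
apply/card_gt0P; rewrite card_draws card_ord bin_gt0 //.
Qed.

Lemma batches_gt0 j : (0 < #|batches n b j|)%N.
Proof.
have [I0 I0B] := B_ne; apply/card_gt0P; exists [ffun => I0].
by rewrite inE; apply/forallP => t; rewrite ffunE; rewrite inE in I0B.
Qed.

Lemma alg_ub (K M Sg X c : R) : 0 < K -> 0 < M -> X <= M * Sg + K * M * c ->
  (K * M)^-1 * X <= K^-1 * Sg + c.
Proof.
move=> K0 M0 HX.
have -> : K^-1 * Sg + c = (K * M)^-1 * (M * Sg + K * M * c).
  by field; rewrite ?gt_eqF.
apply: ler_wpM2l => //; rewrite invr_ge0; exact/ltW/mulr_gt0.
Qed.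

Lemma alg_lb (K M Sg X c : R) : 0 < K -> 0 < M -> M * Sg + K * M * c <= X ->
  K^-1 * Sg + c <= (K * M)^-1 * X.
Proof.
move=> K0 M0 HX.
have -> : K^-1 * Sg + c = (K * M)^-1 * (M * Sg + K * M * c).
  by field; rewrite ?gt_eqF.
apply: ler_wpM2l => //; rewrite invr_ge0; exact/ltW/mulr_gt0.
Qed.

Lemma D_bound j : j%:R * lo <= cond_exp_step b F G eta x0 j <= j%:R * hi.
Proof.
elim: j => [|j IH].
  rewrite /cond_exp_step big1 ?mulr0 ?mul0r ?lexx // => S _ /=.
  by rewrite subrr.
have K0 : 0 < (#|batches n b j|%:R : R) by rewrite ltr0n batches_gt0.
have M0 : 0 < (#|B|%:R : R).
  by have [I0 I0B] := B_ne; rewrite ltr0n; apply/card_gt0P; exists I0.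
have KM : (#|batches n b j.+1|%:R : R) = #|batches n b j|%:R * #|B|%:R.
  rewrite -sumr_const (sum_join b (fun _ => (1 : R))) /= sumr_const sumr_const.
  by rewrite -[X in X = _]mulr_natl.
set xs := fun S : {ffun 'I_j -> {set 'I_n}} => scsg_iter G eta x0 (seq_of_ffun S) j.
have E : cond_exp_step b F G eta x0 j.+1 =
   (#|batches n b j|%:R * #|B|%:R)^-1 *
   \sum_(S in batches n b j) \sum_(I in B) (favg F (stepx (xs S) I) - favg F x0).
  rewrite /cond_exp_step KM sum_join; congr (_ * _); apply: eq_bigr => S _.
  apply: eq_bigr => I _; rewrite iterS seq_join_last /xs.
  by rewrite (@iter_ext _ _ _ G eta x0 _ (seq_of_ffun S)) // => t tj; exact: seq_join.
have Ein x : \sum_(I in B) (favg F (stepx x I) - favg F x0) =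
    #|B|%:R * (favg F x - favg F x0) + \sum_(I in B) (favg F (stepx x I) - favg F x).
  rewrite mulr_natl -sumr_const -big_split; apply: eq_bigr => I _ /=; ring.
set Sg := \sum_(S in batches n b j) (favg F (xs S) - favg F x0).
have Dj : cond_exp_step b F G eta x0 j = #|batches n b j|%:R^-1 * Sg by [].
set X := \sum_(S in batches n b j) \sum_(I in B) (favg F (stepx (xs S) I) - favg F x0).
have XE : X = #|B|%:R * Sg + \sum_(S in batches n b j)
             \sum_(I in B) (favg F (stepx (xs S) I) - favg F (xs S)).
  by rewrite /X (eq_bigr _ (fun S _ => Ein (xs S))) big_split /= -mulr_sumr.
have Xub : X <= #|B|%:R * Sg + #|batches n b j|%:R * #|B|%:R * hi.
  rewrite XE lerD2l -mulrA mulr_natl -sumr_const; apply: ler_sum => S _.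
  exact: step_sum_ub.
have Xlb : #|B|%:R * Sg + #|batches n b j|%:R * #|B|%:R * lo <= X.
  rewrite XE lerD2l -mulrA mulr_natl -sumr_const; apply: ler_sum => S _.
  exact: step_sum_lb.
have U := alg_ub K0 M0 Xub.
have V := alg_lb K0 M0 Xlb.
rewrite E -/X; rewrite -Dj in U V.
move: IH => /andP[IH1 IH2].
rewrite -natr1 !mulrDl !mul1r; apply/andP; split; lra.
Qed.

End Main.

Lemma geom_sum (R : realType) (p q : R) m : p + q = 1 -> 0 < p ->
  \sum_(0 <= j < m) p * q ^+ j * j%:R + (m%:R + q / p) * q ^+ m = q / p.
Proof.
move=> pq p0; have pE : p = 1 - q by lra.
have q1 : 1 - q != 0 by rewrite -pE gt_eqF.
elim: m => [|m IH]; first by rewrite big_geq // add0r add0r expr0 mulr1.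
rewrite big_nat_recr //= -addrA.
have -> : p * q ^+ m * m%:R + (m.+1%:R + q / p) * q ^+ m.+1 = (m%:R + q / p) * q ^+ m.
  by rewrite -natr1 exprS pE; field.
exact: IH.
Qed.

Lemma final_id (R : realType) (r L gamma l : R) : r != 0 -> L != 0 ->
  (r ^+ 3)^-1 * (L / 2 * (gamma * r ^+ 2 / L * (3 * l)) ^+ 2) =
  9 / 2 * (l ^+ 2 * gamma ^+ 2 / L * r).
Proof. by move=> r0 L0; field; rewrite L0 r0. Qed.

Unset Implicit Arguments.

Theorem lemma14 (R : realType) (d n b : nat)
  (F : 'I_n -> 'rV[R]_d -> R) (G : 'I_n -> 'rV[R]_d -> 'rV[R]_d)
  (L l gamma eta : R) (x0 : 'rV[R]_d) :
  (forall z, is_gradient (F z) (G z)) ->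
  0 < L ->
  (forall z x y, enorm (G z x - G z y) <= L * enorm (x - y)) ->
  (forall z x, enorm (G z x) <= l) ->
  (1 <= b)%N -> (8 * b <= n)%N ->
  0 < gamma -> gamma <= 3^-1 ->
  eta * L = gamma * (b%:R / n%:R) `^ (2 / 3) ->
  cvgn (series (scsg_term b F G eta x0)) /\
  limn (series (scsg_term b F G eta x0))
    <= 5 * l ^+ 2 * gamma ^+ 2 / L * (b%:R / n%:R) `^ (1 / 3).
Proof.
move=> HG L0 HL Hl b1 b8n g0 g3 HetaL.
have bn : (b <= n)%N by apply: leq_trans b8n; rewrite leq_pmull.
have n0 : (0 < n)%N := leq_trans b1 bn.
have nR : (0 : R) < n%:R by rewrite ltr0n.
have bR : (0 : R) < b%:R by rewrite ltr0n.
set a := b%:R / n%:R.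
have a0 : 0 < a by rewrite divr_gt0.
set r := a `^ (1/3).
have r0 : 0 < r by rewrite powR_gt0.
have a3 : a = r ^+ 3.
  rewrite /r -powR_mulrn ?ltW // -powRrM.
  have -> : 1 / 3 * 3%:R = 1 :> R by field.
  by rewrite powRr1 // ltW.
have a23 : a `^ (2/3) = r ^+ 2.
  rewrite /r -powR_mulrn ?powR_ge0 // -powRrM.
  by congr (_ `^ _); field.
have L0' : 0 <= L := ltW L0.
have etaE : eta = gamma * r ^+ 2 / L by rewrite -a23 -HetaL mulfK // gt_eqF.
have eta0 : 0 <= eta.
  by rewrite etaE divr_ge0 // mulr_ge0 ?exprn_ge0 // ltW.
set u := scsg_term b F G eta x0.
set lo' := lo l eta; set hi' := hi L l eta.
have Db j := D_bound x0 HG L0' HL Hl b1 bn eta0 j.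
set p : R := b%:R / (n + b)%:R; set q : R := n%:R / (n + b)%:R.
have nb0 : ((n + b)%:R : R) != 0 by rewrite pnatr_eq0 addn_eq0 negb_and -lt0n n0.
have pq : p + q = 1 by rewrite /p /q -mulrDl -natrD addnC divff.
have p0 : 0 < p by rewrite divr_gt0 // ltr0n addn_gt0 n0.
have q0 : 0 <= q by rewrite divr_ge0 // ler0n.
have qp : q / p = n%:R / b%:R by rewrite /p /q invf_div mulrA divfK.
have geomE j : geomP R n b j = p * q ^+ j by [].
have gs m : \sum_(0 <= j < m) p * q ^+ j * j%:R <= n%:R / b%:R.
  rewrite -qp -(geom_sum m pq p0) lerDl; apply: mulr_ge0 (exprn_ge0 _ q0).
  by apply: addr_ge0 (ler0n _ _) (divr_ge0 q0 (ltW p0)).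
set C := `|lo'| + `|hi'|.
have C0 : 0 <= C by rewrite addr_ge0.
have gp j : 0 <= p * q ^+ j by rewrite mulr_ge0 // ?exprn_ge0 // ltW.
have absu j : `|u j| <= p * q ^+ j * j%:R * C.
  rewrite /u /scsg_term normrM geomE (ger0_norm (gp j)).
  rewrite -mulrA; apply: ler_wpM2l; first exact: gp.
  have /andP[H1 H2] := Db j.
  have h1 : - (j%:R * `|lo'|) <= j%:R * lo'.
    by rewrite -mulrN; apply: ler_wpM2l; [exact: ler0n | rewrite lerNl -normrN; exact: ler_norm].
  have h2 : j%:R * hi' <= j%:R * `|hi'| by apply: ler_wpM2l; [exact: ler0n | exact: ler_norm].
  have h3 : 0 <= j%:R * `|lo'| by rewrite mulr_ge0.
  have h4 : 0 <= j%:R * `|hi'| by rewrite mulr_ge0.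
  rewrite ler_norml /C mulrDr; apply/andP; split; rewrite -/lo' -/hi' in H1 H2; lra.
have bnd m : \sum_(0 <= j < m) `|u j| <= n%:R / b%:R * C.
  apply: le_trans (ler_sum _ (fun j _ => absu j)) _; rewrite -mulr_suml.
  by apply: ler_wpM2r => //; exact: gs.
have cvgu : cvgn (series u).
  apply: normed_cvg; apply: nondecreasing_is_cvgn.
    by apply: nondecreasing_series => j _ _; exact: normr_ge0.
  by exists (n%:R / b%:R * C) => _ [m _ <-]; exact: bnd m.
split => //.
apply: limr_le => //; apply: nearW => m; rewrite /series /=.
have hi0 : 0 <= hi' by rewrite /hi' /hi mulr_ge0 ?sqr_ge0 // divr_ge0.
have uj j : u j <= p * q ^+ j * j%:R * hi'.
  rewrite /u /scsg_term geomE -[X in _ <= X]mulrA; apply: ler_wpM2l; first exact: gp.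
  by have /andP[_ ->] := Db j.
apply: le_trans (ler_sum _ (fun j _ => uj j)) _; rewrite -mulr_suml.
apply: le_trans (ler_wpM2r hi0 (gs m)) _.
have -> : n%:R / b%:R = (r ^+ 3)^-1 by rewrite -a3 /a invf_div.
rewrite /hi' /hi etaE.
have -> : (r ^+ 3)^-1 * (L / 2 * (gamma * r ^+ 2 / L * (3 * l)) ^+ 2) =
          9 / 2 * (l ^+ 2 * gamma ^+ 2 / L * r).
  by apply: final_id; rewrite gt_eqF.
have : 0 <= l ^+ 2 * gamma ^+ 2 / L * r.
  apply: mulr_ge0; last exact: ltW. apply: divr_ge0; last exact: ltW. by rewrite mulr_ge0 // sqr_ge0.
have -> : 5 * l ^+ 2 * gamma ^+ 2 / L * r = 5 * (l ^+ 2 * gamma ^+ 2 / L * r) by rewrite !mulrA.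
lra.
Qed.
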